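(* Let $P_1,P_2\in\mathbf{C}^{n\times n}$. The following three statements are equivalent: (1) $\{P_1,P_2\}>0$ (resp. $\geq 0$); (2) $\{P_1,P_2\}_\circ>0$ (resp. $\geq 0$); (3) $\{P_1,P_2\}_\diamond>0$ (resp. $\geq0$). Moreover, a real matrix $P\in\mathbf{R}^{2n\times 2n}$ is positive definite (resp. positive semidefinite) if and only if there exists a unique bimatrix $\{P_1,P_2\}>0$ (resp. $\geq 0$) such that $\{P_1,P_2\}_\circ=P$.
   Context: $P^{\#}$, $P^{\mathrm T}$, $P^{\mathrm H}$ denote entrywise conjugate, transpose, conjugate transpose. For $A_1,A_2\in\mathbf{C}^{n\times m}$ the bimatrix $\{A_1,A_2\}$ is the real-linear map $x\mapsto A_1x+A_2^{\#}x^{\#}$ (equality = equality as maps, equivalently of the pairs). Its conjugate transpose is $\{A_1,A_2\}^{\mathrm H}=\{A_1^{\mathrm H},A_2^{\mathrm T}\}$. A square bimatrix $\{P_1,P_2\}$ is Hermite if $\{P_1,P_2\}=\{P_1,P_2\}^{\mathrm H}$, i.e. $P_1=P_1^{\mathrm H}$ and $P_2=P_2^{\mathrm T}$. It is positive definite (resp. semidefinite), written $\{P_1,P_2\}>0$ (resp. $\geq0$), if it is Hermite and $\mathrm{Re}\big(x^{\mathrm H}(P_1x+P_2^{\#}x^{\#})\big)>0$ (resp. $\geq 0$) for all nonzero $x\in\mathbf{C}^n$. Complex lifting: $\{P_1,P_2\}_\diamond=\begin{bmatrix}P_1 & P_2^{\#}\\ P_2 & P_1^{\#}\end{bmatrix}$.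 Real representation: $\{P_1,P_2\}_\circ=\begin{bmatrix}\mathrm{Re}(P_1+P_2) & -\mathrm{Im}(P_1+P_2)\\ \mathrm{Im}(P_1-P_2) & \mathrm{Re}(P_1-P_2)\end{bmatrix}$. For an ordinary (real or complex) square matrix, $>0$ (resp. $\geq0$) means Hermitian (symmetric if real) positive definite (resp. semidefinite). *)

(* Defs.v *)
From HB Require Import structures.
From mathcomp Require Import all_boot all_order all_algebra.
From mathcomp Require Import complex.
Set Implicit Arguments. Unset Strict Implicit. Unset Printing Implicit Defensive.
Import Order.TTheory GRing.Theory Num.Theory.
Local Open Scope ring_scope.

Section BiMatrix.
Variable R : rcfType.
Local Notation C := (R[i]).

Definition mxconj m n (A : 'M[C]_(m, n)) : 'M[C]_(m, n) := map_mx (@conjc R) A.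
Definition mxH m n (A : 'M[C]_(m, n)) : 'M[C]_(n, m) := (mxconj A)^T.

Definition biapply m n (A1 A2 : 'M[C]_(m, n)) (x : 'cV[C]_n) : 'cV[C]_m :=
  A1 *m x + mxconj A2 *m mxconj x.

(* Hermite bimatrix {P1,P2} = {P1,P2}^H, i.e. P1 = P1^H and P2 = P2^T *)
Definition bi_hermite n (P1 P2 : 'M[C]_n) : Prop := P1 = mxH P1 /\ P2 = P2^T.

Definition bi_posdef n (P1 P2 : 'M[C]_n) : Prop :=
  bi_hermite P1 P2 /\
  forall x : 'cV[C]_n, x != 0 -> 0 < complex.Re ((mxH x *m biapply P1 P2 x) 0 0).

Definition bi_possemidef n (P1 P2 : 'M[C]_n) : Prop :=
  bi_hermite P1 P2 /\
  forall x : 'cV[C]_n, 0 <= complex.Re ((mxH x *m biapply P1 P2 x) 0 0).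

(* complex lifting {P1,P2}_diamond *)
Definition bi_lift n (P1 P2 : 'M[C]_n) : 'M[C]_(n + n) :=
  block_mx P1 (mxconj P2) P2 (mxconj P1).

Definition mxRe m n (A : 'M[C]_(m, n)) : 'M[R]_(m, n) := map_mx (@complex.Re R) A.
Definition mxIm m n (A : 'M[C]_(m, n)) : 'M[R]_(m, n) := map_mx (@complex.Im R) A.

(* real representation {P1,P2}_circ *)
Definition bi_real n (P1 P2 : 'M[C]_n) : 'M[R]_(n + n) :=
  block_mx (mxRe (P1 + P2)) (- mxIm (P1 + P2)) (mxIm (P1 - P2)) (mxRe (P1 - P2)).

Definition cmx_posdef m (A : 'M[C]_m) : Prop :=
  A = mxH A /\ forall x : 'cV[C]_m, x != 0 -> 0 < (mxH x *m A *m x) 0 0.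
Definition cmx_possemidef m (A : 'M[C]_m) : Prop :=
  A = mxH A /\ forall x : 'cV[C]_m, 0 <= (mxH x *m A *m x) 0 0.

Definition rmx_posdef m (A : 'M[R]_m) : Prop :=
  A = A^T /\ forall x : 'cV[R]_m, x != 0 -> 0 < (x^T *m A *m x) 0 0.
Definition rmx_possemidef m (A : 'M[R]_m) : Prop :=
  A = A^T /\ forall x : 'cV[R]_m, 0 <= (x^T *m A *m x) 0 0.

End BiMatrix.

(* Main.v *)
Require Import Defs.
From HB Require Import structures.
From mathcomp Require Import all_boot all_order all_algebra.
From mathcomp Require Import complex ring lra.
Import Order.TTheory GRing.Theory Num.Theory.
Local Open Scope ring_scope.
Set Implicit Arguments. Unset Strict Implicit. Unset Printing Implicit Defensive.
Section S.
Variable R : rcfType.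
Local Open Scope complex_scope.
Local Notation Re := (@complex.Re R).
Local Notation Im := (@complex.Im R).
Local Notation C := (R[i]).

Definition rq m (M : 'M[R]_m) (w : 'cV[R]_m) := (w^T *m M *m w) 0 0.

Lemma rqE m (M : 'M[R]_m) w : rq M w = \sum_i \sum_j w i 0 * M i j * w j 0.
Proof.
rewrite /rq mxE; under eq_bigr => j _ do rewrite mxE mulr_suml.
rewrite exchange_big; apply: eq_bigr => i _; apply: eq_bigr => j _.
by rewrite !mxE.
Qed.

Lemma cqE m (A : 'M[C]_m) (x : 'cV[C]_m) :
  (mxH x *m A *m x) 0 0 = \sum_i \sum_j (x i 0)^*%C * A i j * x j 0.
Proof.
rewrite mxE; under eq_bigr => j _ do rewrite mxE mulr_suml.
rewrite exchange_big; apply: eq_bigr => i _; apply: eq_bigr => j _.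
by rewrite !mxE.
Qed.

Lemma bqE m (P1 P2 : 'M[C]_m) (x : 'cV[C]_m) :
  (mxH x *m biapply P1 P2 x) 0 0 =
  \sum_i \sum_j (x i 0)^*%C * (P1 i j * x j 0 + (P2 i j)^*%C * (x j 0)^*%C).
Proof.
rewrite mxE; apply: eq_bigr => i _.
rewrite !mxE -big_split mulr_sumr; apply: eq_bigr => j _.
by rewrite /mxconj !mxE.
Qed.

Lemma ReD (x y : C) : Re (x + y) = Re x + Re y. Proof. by case: x; case: y. Qed.
Lemma ImD (x y : C) : Im (x + y) = Im x + Im y. Proof. by case: x; case: y. Qed.

Lemma ReS m (f : 'I_m -> C) : Re (\sum_i f i) = \sum_i Re (f i).
Proof. exact: (big_morph _ ReD (erefl _)). Qed.

Lemma sum2_split (T : zmodType) m (f : 'I_(m+m) -> 'I_(m+m) -> T) :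
  \sum_i \sum_j f i j = \sum_i \sum_j (f (lshift m i) (lshift m j)
    + f (lshift m i) (rshift m j) + f (rshift m i) (lshift m j)
    + f (rshift m i) (rshift m j)).
Proof.
rewrite big_split_ord /=.
under eq_bigr do rewrite big_split_ord.
under [X in _ + X]eq_bigr do rewrite big_split_ord.
rewrite !big_split /=.
under [RHS]eq_bigr do rewrite !big_split /=.
by rewrite !big_split /= !addrA.
Qed.

Lemma bi_real_form n (P1 P2 : 'M[C]_n) (x : 'cV[C]_n) :
  Re ((mxH x *m biapply P1 P2 x) 0 0) = rq (bi_real P1 P2) (col_mx (mxRe x) (mxIm x)).
Proof.
rewrite bqE ReS rqE sum2_split; apply: eq_bigr => i _; rewrite ReS; apply: eq_bigr => j _.
rewrite /bi_real !col_mxEu !col_mxEd !row_mxEl !row_mxEr.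
rewrite /mxRe /mxIm !mxE.
move: (x i 0) (x j 0) (P1 i j) (P2 i j) => [a b] [c d] [e f] [g h].
simpc; rewrite /=. ring.
Qed.
Lemma ReB (x y : C) : Re (x - y) = Re x - Re y. Proof. by case: x; case: y. Qed.
Lemma ImB (x y : C) : Im (x - y) = Im x - Im y. Proof. by case: x; case: y. Qed.
Lemma cext (x y : C) : Re x = Re y -> Im x = Im y -> x = y.
Proof. by case: x => a b; case: y => c d /= -> ->. Qed.

Lemma hermiteE n (P1 P2 : 'M[C]_n) : bi_hermite P1 P2 <->
  (forall i j, P1 i j = (P1 j i)^*%C) /\ (forall i j, P2 i j = P2 j i).
Proof.
split=> [[/matrixP h1 /matrixP h2]|[h1 h2]].
  by split=> i j; [rewrite {1}h1 !mxE | rewrite {1}h2 !mxE].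
by split; apply/matrixP => i j; rewrite !mxE.
Qed.

Lemma hermite_real n (P1 P2 : 'M[C]_n) :
  bi_hermite P1 P2 <-> bi_real P1 P2 = (bi_real P1 P2)^T.
Proof.
rewrite hermiteE /bi_real tr_block_mx; split=> [[h1 h2]|].
  congr block_mx; apply/matrixP => i j; rewrite /mxRe /mxIm !mxE (h1 i j) (h2 i j);
  by move: (P1 j i) (P2 j i) => [a b] [c d]; simpc; rewrite /=; ring.
case/eq_block_mx => /matrixP E1 /matrixP E2 /matrixP E3 /matrixP E4.
split=> i j.
  move: (E1 i j) (E2 i j) (E2 j i) (E4 i j); rewrite /mxRe /mxIm !mxE.
  move: (P1 i j) (P1 j i) (P2 i j) (P2 j i) => [a b] [c d] [e f] [g h].
  rewrite ?ReD ?ImD ?ReB ?ImB /= => *; apply: cext => /=; lra.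
move: (E1 i j) (E2 i j) (E2 j i) (E4 i j); rewrite /mxRe /mxIm !mxE.
move: (P1 i j) (P1 j i) (P2 i j) (P2 j i) => [a b] [c d] [e f] [g h].
rewrite ?ReD ?ImD ?ReB ?ImB /= => *; apply: cext => /=; lra.
Qed.
Lemma hermite_lift n (P1 P2 : 'M[C]_n) :
  bi_hermite P1 P2 <-> bi_lift P1 P2 = mxH (bi_lift P1 P2).
Proof.
rewrite hermiteE /bi_lift /mxH /mxconj map_block_mx tr_block_mx; split=> [[h1 h2]|].
  by congr block_mx; apply/matrixP => i j; rewrite !mxE ?(h1 i j) ?(h2 i j) ?conjcK.
case/eq_block_mx => /matrixP E1 /matrixP E2 /matrixP E3 /matrixP E4.
split=> i j.
  by move: (E1 i j); rewrite !mxE.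
move: (E2 i j); rewrite !mxE.
move: (P2 i j) (P2 j i) => [a b] [c d] [-> /eqP]; rewrite eqr_opp => /eqP ->.
by [].
Qed.
Lemma ReC (r : R) : Re (r%:C) = r. Proof. by []. Qed.
Lemma ImC (r : R) : Im (r%:C) = 0. Proof. by []. Qed.

Lemma ReN (x : C) : Re (- x) = - Re x. Proof. by case: x. Qed.
Lemma ImN (x : C) : Im (- x) = - Im x. Proof. by case: x. Qed.
Lemma ReK (a b : R) : Re (a +i* b) = a. Proof. by []. Qed.
Lemma ImK (a b : R) : Im (a +i* b) = b. Proof. by []. Qed.

Lemma sym_sum m (f : 'I_m -> 'I_m -> C) g :
  (forall i j, f i j + f j i = g i j) -> (\sum_i \sum_j f i j) *+ 2 = \sum_i \sum_j g i j.
Proof.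
move=> fg; rewrite mulr2n {2}exchange_big -big_split /=; apply: eq_bigr => i _.
by rewrite -big_split /=; apply: eq_bigr => j _.
Qed.

Lemma lift_form n (P1 P2 : 'M[C]_n) (x y : 'cV[C]_n) : bi_hermite P1 P2 ->
  (mxH (col_mx x y) *m bi_lift P1 P2 *m col_mx x y) 0 0 =
  ((rq (bi_real P1 P2) (col_mx (mxRe x + mxRe y) (mxIm x - mxIm y)) +
    rq (bi_real P1 P2) (col_mx (mxIm x + mxIm y) (mxRe y - mxRe x))) / 2)%:C.
Proof.
move/hermiteE => [h1 h2].
have key : (mxH (col_mx x y) *m bi_lift P1 P2 *m col_mx x y) 0 0 *+ 2 =
  (rq (bi_real P1 P2) (col_mx (mxRe x + mxRe y) (mxIm x - mxIm y)) +
    rq (bi_real P1 P2) (col_mx (mxIm x + mxIm y) (mxRe y - mxRe x)))%:C.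
  rewrite cqE sum2_split !rqE !sum2_split -big_split /= rmorph_sum.
  under [in RHS]eq_bigr do rewrite -big_split /= rmorph_sum.
  apply: sym_sum => i j.
  rewrite /bi_lift /bi_real !col_mxEu !col_mxEd !row_mxEl !row_mxEr /mxconj /mxRe /mxIm !mxE (h1 j i) (h2 j i).
  apply: cext; rewrite ?ReC ?ImC ?(ReD, ImD, ReB, ImB, ReN, ImN);
  move: (x i 0) (x j 0) (y i 0) (y j 0) (P1 i j) (P2 i j) => [a1 b1] [a2 b2] [a3 b3] [a4 b4] [a5 b5] [a6 b6];
  simpc; rewrite ?ReK ?ImK; ring.
move: key; set L := (mxH _ *m _ *m _) 0 0 => key.
apply: cext.
  have := congr1 Re key; rewrite ReC mulr2n ReD => <-; rewrite ReC; lra.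
have := congr1 Im key; rewrite ImC mulr2n ImD; rewrite ImC; lra.
Qed.

Definition cv m (u v : 'cV[R]_m) : 'cV[C]_m := \matrix_(i, j) (u i j +i* v i j).
Lemma mxRe_cv m (u v : 'cV[R]_m) : mxRe (cv u v) = u.
Proof. by apply/matrixP => i j; rewrite !mxE. Qed.
Lemma mxIm_cv m (u v : 'cV[R]_m) : mxIm (cv u v) = v.
Proof. by apply/matrixP => i j; rewrite !mxE. Qed.
Lemma mxRe_conj m (x : 'cV[C]_m) : mxRe (mxconj x) = mxRe x.
Proof. by apply/matrixP => i j; rewrite !mxE; case: (x i j). Qed.
Lemma mxIm_conj m (x : 'cV[C]_m) : mxIm (mxconj x) = - mxIm x.
Proof. by apply/matrixP => i j; rewrite !mxE; case: (x i j). Qed.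

Lemma cx_eq0 m (x : 'cV[C]_m) : mxRe x = 0 -> mxIm x = 0 -> x = 0.
Proof.
move=> /matrixP h1 /matrixP h2; apply/matrixP => i j.
move: (h1 i j) (h2 i j); rewrite !mxE; case: (x i j) => a b /= -> ->. by [].
Qed.

Lemma col_nz m (x : 'cV[C]_m) : x != 0 -> col_mx (mxRe x) (mxIm x) != 0.
Proof.
apply: contra => /eqP; rewrite -col_mx0 => /eq_col_mx [h1 h2].
by apply/eqP; apply: cx_eq0.
Qed.

Lemma cv_nz m (w : 'cV[R]_(m + m)) : w != 0 -> cv (usubmx w) (dsubmx w) != 0.
Proof.
apply: contra => /eqP h; apply/eqP.
rewrite -(vsubmxK w) -(mxRe_cv (usubmx w) (dsubmx w)) -{2}(mxIm_cv (usubmx w) (dsubmx w)).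
by rewrite h -col_mx0; congr col_mx; apply/matrixP => i j; rewrite !mxE.
Qed.

Lemma cv_col m (w : 'cV[R]_(m + m)) :
  w = col_mx (mxRe (cv (usubmx w) (dsubmx w))) (mxIm (cv (usubmx w) (dsubmx w))).
Proof. by rewrite mxRe_cv mxIm_cv vsubmxK. Qed.

Lemma rq0 m (M : 'M[R]_m) : rq M 0 = 0.
Proof. by rewrite /rq mulmx0 mxE. Qed.

Lemma rq_double m (M : 'M[R]_m) w : rq M (w + w) = 4%:R * rq M w.
Proof.
rewrite !rqE mulr_sumr; apply: eq_bigr => i _; rewrite mulr_sumr; apply: eq_bigr => j _.
rewrite !mxE; ring.
Qed.

Lemma pos_real n (P1 P2 : 'M[C]_n) : bi_posdef P1 P2 <-> rmx_posdef (bi_real P1 P2).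
Proof.
split=> [[hH hp]|[hS hp]]; split.
- exact/hermite_real.
- by move=> w w0; have := hp _ (cv_nz w0); rewrite bi_real_form -cv_col.
- exact/hermite_real.
- by move=> x x0; rewrite bi_real_form; apply: hp; apply: col_nz.
Qed.

Lemma psd_real n (P1 P2 : 'M[C]_n) : bi_possemidef P1 P2 <-> rmx_possemidef (bi_real P1 P2).
Proof.
split=> [[hH hp]|[hS hp]]; split.
- exact/hermite_real.
- by move=> w; have := hp (cv (usubmx w) (dsubmx w)); rewrite bi_real_form -cv_col.
- exact/hermite_real.
- by move=> x; rewrite bi_real_form; apply: hp.
Qed.

Lemma W_nz n (x y : 'cV[C]_n) : col_mx x y != 0 ->
  col_mx (mxRe x + mxRe y) (mxIm x - mxIm y) != 0 \/
  col_mx (mxIm x + mxIm y) (mxRe y - mxRe x) != 0.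
Proof.
move=> z0.
have [h1|h1] := eqVneq (col_mx (mxRe x + mxRe y) (mxIm x - mxIm y)) 0; last by left.
have [h2|h2] := eqVneq (col_mx (mxIm x + mxIm y) (mxRe y - mxRe x)) 0; last by right.
exfalso; move/eqP: z0; apply.
move: h1 h2; rewrite -!col_mx0 => /eq_col_mx [/matrixP a1 /matrixP a2] /eq_col_mx [/matrixP a3 /matrixP a4].
congr col_mx; apply/matrixP => i j; move: (a1 i j) (a2 i j) (a3 i j) (a4 i j); rewrite !mxE;
case: (x i j) (y i j) => [a b] [c d] /= *; apply: cext => /=; lra.
Qed.

Lemma pos_lift n (P1 P2 : 'M[C]_n) : bi_posdef P1 P2 <-> cmx_posdef (bi_lift P1 P2).
Proof.
split=> [hb|[hL hp]].
  have hH := hb.1; have [_ hp] := (pos_real P1 P2).1 hb.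
  have hp' : forall w, w != 0 -> 0 < rq (bi_real P1 P2) w := hp.
  have hge : forall w, 0 <= rq (bi_real P1 P2) w.
    by move=> w; have [->|w0] := eqVneq w 0; [rewrite rq0 | exact/ltW/hp'].
  split; first exact/hermite_lift.
  move=> z z0; rewrite -(vsubmxK z) lift_form // ltcR; rewrite -(vsubmxK z) in z0.
  move: (hge (col_mx (mxRe (usubmx z) + mxRe (dsubmx z)) (mxIm (usubmx z) - mxIm (dsubmx z))))
        (hge (col_mx (mxIm (usubmx z) + mxIm (dsubmx z)) (mxRe (dsubmx z) - mxRe (usubmx z)))).
  by case: (W_nz z0) => h; move: (hp' _ h); lra.
have hH : bi_hermite P1 P2 by apply/hermite_lift.
apply/pos_real; split; first exact/hermite_real.
move=> w w0; have x0 := cv_nz w0.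
have ew : col_mx (mxRe (cv (usubmx w) (dsubmx w))) (mxIm (cv (usubmx w) (dsubmx w))) = w.
  by rewrite mxRe_cv mxIm_cv vsubmxK.
move: x0 ew; move: (cv (usubmx w) (dsubmx w)) => x x0 ew.
have z0 : col_mx x (mxconj x) != 0.
  by apply: contra x0 => /eqP; rewrite -col_mx0 => /eq_col_mx [-> _].
have := hp _ z0; rewrite lift_form // ltcR mxRe_conj mxIm_conj opprK !subrr col_mx0 rq0.
rewrite -add_col_mx rq_double ew addr0 => h.
change (0 < rq (bi_real P1 P2) w); lra.
Qed.

Lemma psd_lift n (P1 P2 : 'M[C]_n) : bi_possemidef P1 P2 <-> cmx_possemidef (bi_lift P1 P2).
Proof.
split=> [hb|[hL hp]].
  have hH := hb.1; have [_ hp] := (psd_real P1 P2).1 hb.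
  have hge : forall w, 0 <= rq (bi_real P1 P2) w := hp.
  split; first exact/hermite_lift.
  move=> z; rewrite -(vsubmxK z) lift_form // lecR.
  move: (hge (col_mx (mxRe (usubmx z) + mxRe (dsubmx z)) (mxIm (usubmx z) - mxIm (dsubmx z))))
        (hge (col_mx (mxIm (usubmx z) + mxIm (dsubmx z)) (mxRe (dsubmx z) - mxRe (usubmx z)))).
  lra.
have hH : bi_hermite P1 P2 by apply/hermite_lift.
apply/psd_real; split; first exact/hermite_real.
move=> w.
have ew : col_mx (mxRe (cv (usubmx w) (dsubmx w))) (mxIm (cv (usubmx w) (dsubmx w))) = w.
  by rewrite mxRe_cv mxIm_cv vsubmxK.
move: ew; move: (cv (usubmx w) (dsubmx w)) => x ew.
have := hp (col_mx x (mxconj x)); rewrite lift_form // lecR mxRe_conj mxIm_conj opprK !subrr col_mx0 rq0.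
rewrite -add_col_mx rq_double ew addr0 => h.
change (0 <= rq (bi_real P1 P2) w); lra.
Qed.
Definition invQ1 n (P : 'M[R]_(n + n)) : 'M[C]_n :=
  \matrix_(i, j) (((ulsubmx P i j + drsubmx P i j) / 2%:R) +i* ((dlsubmx P i j - ursubmx P i j) / 2%:R)).
Definition invQ2 n (P : 'M[R]_(n + n)) : 'M[C]_n :=
  \matrix_(i, j) (((ulsubmx P i j - drsubmx P i j) / 2%:R) +i* ((- ursubmx P i j - dlsubmx P i j) / 2%:R)).

Lemma bi_real_inv n (P : 'M[R]_(n + n)) : bi_real (invQ1 P) (invQ2 P) = P.
Proof.
rewrite -[RHS]submxK /bi_real; congr block_mx; apply/matrixP => i j;
rewrite /mxRe /mxIm !mxE ?(ReD, ImD, ReB, ImB, ReN, ImN) ?ReK ?ImK; lra.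
Qed.

Lemma bi_real_inj n (P1 P2 Q1 Q2 : 'M[C]_n) :
  bi_real P1 P2 = bi_real Q1 Q2 -> P1 = Q1 /\ P2 = Q2.
Proof.
case/eq_block_mx => /matrixP E1 /matrixP E2 /matrixP E3 /matrixP E4.
split; apply/matrixP => i j;
move: (E1 i j) (E2 i j) (E3 i j) (E4 i j); rewrite /mxRe /mxIm !mxE;
move: (P1 i j) (P2 i j) (Q1 i j) (Q2 i j) => [a b] [c d] [e f] [g h];
rewrite ?(ReD, ImD, ReB, ImB, ReN, ImN) ?ReK ?ImK => *; apply: cext; rewrite ?ReK ?ImK; lra.
Qed.
End S.

Unset Implicit Arguments.
Theorem lemma7 (R : rcfType) (n : nat) :
  (forall P1 P2 : 'M[R[i]]_n,
     (bi_posdef P1 P2 <-> rmx_posdef (bi_real P1 P2)) /\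
     (bi_posdef P1 P2 <-> cmx_posdef (bi_lift P1 P2)) /\
     (bi_possemidef P1 P2 <-> rmx_possemidef (bi_real P1 P2)) /\
     (bi_possemidef P1 P2 <-> cmx_possemidef (bi_lift P1 P2))) /\
  (forall P : 'M[R]_(n + n),
     (rmx_posdef P <->
        exists! Q : 'M[R[i]]_n * 'M[R[i]]_n,
          bi_posdef Q.1 Q.2 /\ bi_real Q.1 Q.2 = P) /\
     (rmx_possemidef P <->
        exists! Q : 'M[R[i]]_n * 'M[R[i]]_n,
          bi_possemidef Q.1 Q.2 /\ bi_real Q.1 Q.2 = P)).
Proof.
split.
  move=> P1 P2; split; first exact: pos_real.
  split; first exact: pos_lift.
  split; [exact: psd_real | exact: psd_lift].
move=> P; split; split.
- move=> hP; exists (invQ1 P, invQ2 P); split.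
    by split=> //=; [apply/pos_real; rewrite bi_real_inv | exact: bi_real_inv].
  move=> [Q1 Q2] /= [_ e]; rewrite -(bi_real_inv P) in e.
  by case: (bi_real_inj e) => -> ->.
- by case=> [[Q1 Q2] /= [[hb <-] _]]; apply/pos_real.
- move=> hP; exists (invQ1 P, invQ2 P); split.
    by split=> //=; [apply/psd_real; rewrite bi_real_inv | exact: bi_real_inv].
  move=> [Q1 Q2] /= [_ e]; rewrite -(bi_real_inv P) in e.
  by case: (bi_real_inj e) => -> ->.
- by case=> [[Q1 Q2] /= [[hb <-] _]]; apply/psd_real.
Qed.
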